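(* Let $(F,\|\cdot\|)$ be a normed space, $(a_{ij})_{i,j\le n}$ a symmetric matrix with entries in $F$, $g_1,\dots,g_n$ i.i.d. $\mathcal N(0,1)$ random variables, and $p\ge1$. Let $W= \|\sum_{i\neq j}a_{ij}g_ig_j\|_p+\|\sum_{i}a_{ii}(g_i^2-1)\|_p$. Then \[ \frac{1}{3}W \leq \Big\|\sum_{i,j}a_{ij}(g_ig_j-\delta_{ij})\Big\|_p \leq W. \]
   Context: For an $F$-valued random variable $Z$, $\|Z\|_p=(\mathbb{E}\|Z\|^p)^{1/p}$. $\delta_{ij}$ is the Kronecker delta; sums run over $\{1,\dots,n\}$. *)

(* Defs.v *)
From HB Require Import structures.
From mathcomp Require Import all_boot all_order all_algebra.
From mathcomp Require Import all_classical all_reals all_analysis.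
Set Implicit Arguments. Unset Strict Implicit. Unset Printing Implicit Defensive.
Import Order.TTheory GRing.Theory Num.Theory.
Import numFieldNormedType.Exports.
Local Open Scope classical_set_scope.
Local Open Scope ring_scope.

(* Mutual independence of a finite family of real random variables:
   product rule for preimages of arbitrary Borel sets (taking B i = setT
   recovers every subfamily). *)
Definition mutually_independent_RVs d (T : measurableType d) (R : realType)
  (P : probability T R) (n : nat) (g : 'I_n -> {RV P >-> R}) : Prop :=
  forall B : 'I_n -> set R, (forall i, measurable (B i)) ->
    P (\bigcap_(i in [set: 'I_n]) (g i @^-1` B i)) =
    (\prod_(i < n) P (g i @^-1` B i))%E.

Definition standard_gaussian d (T : measurableType d) (R : realType)
  (P : probability T R) (X : {RV P >-> R}) : Prop :=
  forall A : set R, measurable A -> distribution P X A = normal_prob 0 1 A.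

Definition momentp d (T : measurableType d) (R : realType)
  (F : normedModType R) (P : probability T R) (p : R) (Z : T -> F) : \bar R :=
  Lnorm P p%:E (fun w => (`|Z w|)%:E).

(* Main.v *)
Require Import Defs.
From HB Require Import structures.
From mathcomp Require Import all_boot all_order all_algebra.
From mathcomp Require Import all_classical all_reals all_analysis.
From mathcomp Require Import ring lra measurable_realfun zify.
Import Order.TTheory GRing.Theory Num.Theory.
Import numFieldNormedType.Exports.
Local Open Scope classical_set_scope.
Local Open Scope ring_scope.
Section NormComb.
Context {R : realType} (F : normedModType R) (I : finType).
Variable v : I -> F.

Definition Nf (c : I -> R) := `|\sum_i c i *: v i|.

Lemma Nf_lip (c r : I -> R) : Nf c <= Nf r + \sum_i `|v i| * `|c i - r i|.
Proof.
rewrite /Nf -lerBlDl.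
apply: (le_trans (lerB_dist _ _)).
rewrite -sumrB.
under eq_bigr do rewrite -scalerBl.
apply: (le_trans (ler_norm_sum _ _ _)).
by apply: ler_sum => i _; rewrite normrZ mulrC.
Qed.

Lemma measurable_norm_comb d (S : measurableType d) (f : I -> S -> R) :
  (forall i, measurable_fun setT (f i)) ->
  measurable_fun setT (fun w => `|\sum_i f i w *: v i|).
Proof.
move=> mf.
pose L := \sum_i `|v i|.
pose rq (q : {ffun I -> rat}) : I -> R := fun i => ratr (q i).
pose u (q : {ffun I -> rat}) (w : S) :=
  Nf (rq q) - \sum_i `|v i| * `|f i w - rq q i|.
pose h (k : nat) := u (odflt [ffun=> 0] (unpickle k)).
have ub w k : h k w <= Nf (fun i => f i w).
  rewrite /h /u lerBlDr; set q := odflt _ _.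
  apply: (le_trans (Nf_lip _ (fun i => f i w))).
  by rewrite lerD2l; apply: ler_sum => i _; rewrite distrC.
have L0 : 0 <= L by apply: sumr_ge0 => i _.
have eq w : Nf (fun i => f i w) = sups (h ^~ w) 0.
  rewrite /sups /=.
  have ne : sdrop (h ^~ w) 0 !=set0 by exists (h 0%N w); exists 0%N.
  have ubd : ubound (sdrop (h ^~ w) 0) (Nf (fun i => f i w)).
    by move=> _ [k _ <-]; exact: ub.
  apply/eqP; rewrite eq_le; apply/andP; split; last first.
    exact: ge_sup.
  apply/ler_addgt0Pr => e e0.
  pose de := e / (2 * (L + 1)).
  have de0 : 0 < de by rewrite divr_gt0 // mulr_gt0 // ltr_wpDl.
  have : forall i, exists q : rat, `|f i w - ratr q| < de.
    move=> i; have /rat_in_itvoo [q] : f i w - de < f i w + de.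
      by rewrite ltrD2l gtrN.
    rewrite in_itv /= => /andP [q1 q2]; exists q.
    rewrite ltr_norml; apply/andP; split; first by rewrite ltrBrDl; lra.
    by rewrite ltrBlDr; lra.
  move=> /choice [qf Hq].
  pose qq : {ffun I -> rat} := [ffun i => qf i].
  have hk : h (pickle qq) w = u qq w by rewrite /h pickleK.
  have Hs : \sum_i `|v i| * `|f i w - rq qq i| <= de * L.
    rewrite /L mulr_sumr; apply: ler_sum => i _.
    rewrite mulrC ler_wpM2r // /rq ffunE; exact: ltW.
  have Hde : de * (2 * (L + 1)) = e by rewrite /de divfK // mulf_neq0 // gt_eqF // ltr_wpDl.
  have Hsup : u qq w <= sup (sdrop (h ^~ w) 0).
    rewrite -hk; apply: ub_le_sup; first by exists (Nf (fun i => f i w)).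
    by exists (pickle qq).
  have := Nf_lip (fun i => f i w) (rq qq).
  rewrite /u in Hsup.
  set S1 := \sum_i _ in Hs.
  move=> Hl.
  have : S1 * 2 <= e.
    have : de * L * 2 <= e by rewrite -Hde; nra.
    by apply: le_trans; rewrite ler_wpM2r.
  move=> HH; rewrite /S1 in HH Hsup Hl *.
  lra.
rewrite (_ : (fun w => `|\sum_i f i w *: v i|) = (fun w => sups (h ^~ w) 0)); last first.
  by apply/funext => w; rewrite -eq.
apply: measurable_realfun.measurable_fun_sups.
  by move=> w _; exists (Nf (fun i => f i w)) => _ [k _ <-]; exact: ub.
move=> k; rewrite /h /u; set q := odflt _ _.
apply: measurable_funB; first exact: measurable_cst.
apply: measurable_sum => i.
apply: measurable_funM; first exact: measurable_cst.
apply: measurableT_comp; first exact: normr_measurable.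
apply: measurable_funB; first exact: mf.
exact: measurable_cst.
Qed.

End NormComb.
Section LnormLemmas.
Context d (T : measurableType d) (R : realType) (mu : {measure set T -> \bar R}).
Local Open Scope ereal_scope.

Lemma mpow (f : T -> R) (p : R) : measurable_fun setT f ->
  measurable_fun setT (fun x => (`|(f x)%:E| `^ p)).
Proof.
move=> mf.
apply: (@measurableT_comp _ _ _ _ _ _ (fun x : \bar R => x `^ p)).
  exact: measurable_poweR.
apply: measurableT_comp => //.
exact: measurableT_comp.
Qed.

Lemma Lnorm_le (p : R) (f g : T -> R) : (0 < p)%R ->
  measurable_fun setT f -> measurable_fun setT g ->
  (forall x, `|f x| <= `|g x|)%R ->
  Lnorm mu p%:E (EFin \o f) <= Lnorm mu p%:E (EFin \o g).
Proof.
move=> p0 mf mg fg; rewrite unlock.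
apply: gt0_ler_poweR.
- by rewrite invr_ge0 ltW.
- by rewrite in_itv /= leey andbT integral_ge0 // => x _; exact: poweR_ge0.
- by rewrite in_itv /= leey andbT integral_ge0 // => x _; exact: poweR_ge0.
apply: ge0_le_integral => //.
- by move=> x _; exact: poweR_ge0.
- exact: mpow.
- exact: mpow.
move=> x _ /=; rewrite ?abse_EFin ?poweR_EFin ?lee_fin.
by apply: (@ge0_ler_powR R p (ltW p0)); rewrite ?nnegrE ?normr_ge0.
Qed.

Lemma LnormZ_ge0 (p : R) (c : R) (f : T -> R) : (0 < p)%R -> (0 <= c)%R ->
  measurable_fun setT f ->
  Lnorm mu p%:E (EFin \o (fun x => c * f x)%R) = c%:E * Lnorm mu p%:E (EFin \o f).
Proof.
move=> p0 c0 mf; rewrite unlock /=.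
under eq_integral do rewrite normrM (ger0_norm c0) powRM // EFinM.
rewrite ge0_integralZl_EFin ?powR_ge0 //; last first.
  apply/measurable_EFinP; apply: (@measurableT_comp _ _ _ _ _ _ (fun x : R => (x `^ p)%R)).
    exact: measurable_powR.
  exact: measurableT_comp.
rewrite poweRM //; last 2 first.
- by rewrite lee_fin powR_ge0.
- by rewrite integral_ge0 // => x _; rewrite lee_fin powR_ge0.
by rewrite poweR_EFin -powRrM mulfV ?gt_eqF // powRr1.
Qed.

End LnormLemmas.

Lemma Lnorm_eq_int d (T : measurableType d) (R : realType)
  (mu : {measure set T -> \bar R}) (p : R) (f g : T -> R) :
  (\int[mu]_x (`|(f x)%:E| `^ p) = \int[mu]_x (`|(g x)%:E| `^ p))%E ->
  Lnorm mu p%:E (EFin \o f) = Lnorm mu p%:E (EFin \o g).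
Proof. by move=> H; rewrite unlock /= H. Qed.
Section Rect.
Context (R : realType) (n : nat).
Local Notation tR := (n.-tuple R).

Definition rect : set (set tR) :=
  [set A | exists B : 'I_n -> set R, (forall i, measurable (B i)) /\
     A = \bigcap_(i in [set: 'I_n]) ((fun x : tR => tnth x i) @^-1` B i)].

Lemma rect_measurable : rect `<=` measurable.
Proof.
move=> _ [B [mB ->]].
apply: fin_bigcap_measurable; first exact: finite_finset.
move=> i _; rewrite -[X in measurable X]setTI.
exact: (measurable_tnth i).
Qed.

Lemma rect_setI : setI_closed rect.
Proof.
move=> _ _ [B [mB ->]] [C [mC ->]].
exists (fun i => B i `&` C i); split; first by move=> i; exact: measurableI.
by rewrite -bigcapI.
Qed.

Lemma rect_setT : rect setT.
Proof.
exists (fun=> setT); split => //.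
by apply/seteqP; split => x // i _.
Qed.

Lemma measurable_tupleE : @measurable _ tR = <<s rect >>.
Proof.
apply/seteqP; split; last first.
  apply: smallest_sub; first exact: sigma_algebra_measurable.
  exact: rect_measurable.
apply: smallest_sub; first exact: smallest_sigma_algebra.
apply: (@big_ind _ (fun Y => Y `<=` <<s rect >>)).
- by [].
- by move=> X Y HX HY; rewrite subUset; split.
move=> i _ _ [A mA <-].
apply: sub_sigma_algebra.
exists (fun j => if j == i then A else setT); split.
  by move=> j; case: ifP.
apply/seteqP; split => x /=.
  by move=> [_ Ax] j _; case: ifPn => // /eqP ->.
by move=> H; split => //; have := H i I; rewrite eqxx.
Qed.

End Rect.
Section GaussSym.
Context (R : realType).

Lemma leb_opp (A : set R) : measurable A ->
  lebesgue_measure ((-%R) @^-1` A) = lebesgue_measure A.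
Proof.
move=> mA.
pose mu := measure_function_pushforward__canonical__measure_function_Measure
  (T1:=measurableTypeR R) (T2:=measurableTypeR R) (@lebesgue_measure R) (f:=-%R) (@oppr_measurable R setT).
have := @lebesgue_measure_unique R mu _ A mA.
move=> H; rewrite [RHS]H //.
move=> _ [[a b] _ <-].
rewrite /mu /= /pushforward.
have -> : (-%R) @^-1` [set` `]a, b]] = [set` `[-b, -a[] :> set R.
  apply/seteqP; split => x /=; rewrite !in_itv /=.
    by move=> /andP [h1 h2]; apply/andP; split; [rewrite lerNl | rewrite ltrNr].
  by move=> /andP [h1 h2]; apply/andP; split; [rewrite ltrNr | rewrite lerNl].
rewrite !lebesgue_measure_itv /= !lte_fin ltrN2.
by case: ifP => // _; rewrite opprK addrC.
Qed.

End GaussSym.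

Section GaussSym2.
Context (R : realType).

Lemma normal_pdf_even (x : R) : normal_pdf 0 1 (- x) = normal_pdf 0 1 x.
Proof. by rewrite normal_pdfE ?oner_neq0 // /normal_fun !subr0 sqrrN. Qed.

Lemma normal_sym (B : set R) : measurable B ->
  normal_prob 0 1 ((-%R) @^-1` B) = normal_prob 0 1 B.
Proof.
move=> mB; rewrite /normal_prob.
have mo : measurable_fun [set: measurableTypeR R] (-%R : measurableTypeR R -> measurableTypeR R).
  exact: oppr_measurable.
have := @ge0_integral_pushforward _ _ (measurableTypeR R) (measurableTypeR R) R
  (-%R) mo lebesgue_measure B (fun x => (normal_pdf 0 1 x)%:E) mB.
move=> H.
have mpdf : measurable_fun B (fun x : measurableTypeR R => (normal_pdf 0 1 x)%:E).
  apply/measurable_EFinP; apply: measurable_funTS.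
  exact: measurable_normal_pdf.
have {H} H := H mpdf.
have {H} H : _ := H (fun x _ => normal_pdf_ge0 _ _ x).
transitivity (\int[lebesgue_measure]_(x in -%R @^-1` B) (normal_pdf 0 1 (- x))%:E)%E.
  by apply: eq_integral => x _; rewrite normal_pdf_even.
rewrite -H; apply: eq_measure_integral => A mA _.
by rewrite /= /pushforward leb_opp.
Qed.

End GaussSym2.
Definition Gv {T : Type} {R : realType} {n : nat} (g : 'I_n -> T -> R) (w : T)
  : n.-tuple R := [tuple g i w | i < n].
Definition flipt {R : realType} {n : nat} (k : 'I_n) (x : n.-tuple R)
  : n.-tuple R := [tuple (if i == k then - tnth x i else tnth x i) | i < n].

Lemma tnth_flipt {R : realType} {n : nat} (k i : 'I_n) (x : n.-tuple R) :
  tnth (flipt k x) i = if i == k then - tnth x i else tnth x i.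
Proof. by rewrite tnth_mktuple. Qed.

Lemma mflipt (R : realType) (n : nat) (k : 'I_n) :
  measurable_fun setT (@flipt R n k).
Proof.
apply/measurable_fun_tnthP => i.
rewrite (_ : _ \o _ = fun x => if i == k then - tnth x i else tnth x i); last first.
  by apply/funext => x /=; rewrite tnth_flipt.
case: (i == k); last exact: measurable_tnth.
apply: measurableT_comp; first exact: oppr_measurable.
exact: measurable_tnth.
Qed.

Section LawFlip.
Context d (T : measurableType d) (R : realType) (P : probability T R) (n : nat)
  (g : 'I_n -> {RV P >-> R}).
Hypothesis indep : mutually_independent_RVs g.
Hypothesis gauss : forall i, standard_gaussian (g i).

Local Notation G := (Gv (fun i => (g i : T -> R))).

Lemma mGv : measurable_fun setT G.
Proof.
apply/measurable_fun_tnthP => i.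
rewrite (_ : _ \o _ = g i); last first.
  by apply/funext => x /=; rewrite tnth_mktuple.
exact: measurable_funPT.
Qed.

Lemma law_flip k (h : n.-tuple R -> \bar R) : measurable_fun setT h ->
  (forall x, (0 <= h x)%E) ->
  (\int[P]_w h (G w) = \int[P]_w h (flipt k (G w)))%E.
Proof.
move=> mh h0.
have mG := mGv.
have mFG : measurable_fun setT (flipt k \o G).
  exact: measurableT_comp (@mflipt R n k) mG.
pose m1 := measure_function_pushforward__canonical__measure_function_Measure P mG.
pose m2 := measure_function_pushforward__canonical__measure_function_Measure P mFG.
have E1 := @ge0_integral_pushforward _ _ _ _ _ _ mG P setT h measurableT mh
  (fun x _ => h0 x).
have E2 := @ge0_integral_pushforward _ _ _ _ _ _ mFG P setT h measurableT mh
  (fun x _ => h0 x).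
rewrite preimage_setT in E1; rewrite preimage_setT in E2.
transitivity (\int[P]_x (h \o G) x)%E; first by [].
rewrite -E1.
transitivity (\int[P]_x (h \o (flipt k \o G)) x)%E; last by [].
rewrite -E2.
apply: eq_measure_integral => A mA _.
apply: (measure_unique (rect R n) (fun=> setT) (measurable_tupleE R n)
  (@rect_setI R n) (fun=> rect_setT R n) _ m1 m2) => //.
- by apply/seteqP; split => x // _; exists 0%N.
- move=> _ [B [mB ->]].
  rewrite /m1 /m2 /= /pushforward.
  have -> : G @^-1` (\bigcap_(i in [set: 'I_n]) (fun x => tnth x i) @^-1` B i) =
      \bigcap_(i in [set: 'I_n]) (g i @^-1` B i).
    apply/seteqP; split => w /= H i _; have := H i I; by rewrite /preimage /Gv /= ?tnth_mktuple.
  pose B' i := if i == k then (-%R) @^-1` B i else B i.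
  have mB' : forall i, measurable (B' i).
    move=> i; rewrite /B'; case: (i == k) => //.
    rewrite -[X in measurable X]setTI; exact: oppr_measurable.
  have -> : (flipt k \o G) @^-1` (\bigcap_(i in [set: 'I_n]) (fun x => tnth x i) @^-1` B i) =
      \bigcap_(i in [set: 'I_n]) (g i @^-1` B' i).
    apply/seteqP; split => w /= H i _; have := H i I;
      by rewrite /preimage /B' /Gv /= tnth_flipt ?tnth_mktuple; case: (i == k).
  rewrite (indep B mB) (indep B' mB'); apply: eq_bigr => i _.
  rewrite /B'; case: eqP => // ->.
  have := gauss k _ (mB k); have := gauss k _ (mB' k).
  rewrite /B' eqxx /distribution /pushforward => -> ->.
  by rewrite normal_sym.
- by move=> _; rewrite /m1 /= /pushforward preimage_setT probability_setT ltry.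
Qed.

End LawFlip.
Section Quad.
Context {R : realType} {F : normedModType R} {n : nat} (a : 'M[F]_n).

Definition Qc (k : nat) (i j : 'I_n) (x : n.-tuple R) : R :=
  if ((i == j) || ((k <= i) && (k <= j)))%N then tnth x i * tnth x j - (i == j)%:R
  else 0.

Definition Qk (k : nat) (x : n.-tuple R) : F :=
  \sum_(i < n) \sum_(j < n) Qc k i j x *: a i j.

Lemma Qc_step (k : nat) (hk : (k < n)%N) (i j : 'I_n) (x : n.-tuple R) :
  Qc k.+1 i j x = 2^-1 * (Qc k i j x + Qc k i j (flipt (Ordinal hk) x)).
Proof.
rewrite /Qc !tnth_flipt.
have eK (l : 'I_n) : (l == Ordinal hk) = (nat_of_ord l == k) by [].
rewrite !eK.
case: (eqVneq i j) => [<-|ij] /=.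
  by case: ifP => _; rewrite ?mulrNN; field.
have ij' : (nat_of_ord i == nat_of_ord j) = false by apply/negbTE.

case: ifP => C1.
  have C0 : ((k <= i) && (k <= j))%N. move: C1. lia.
  rewrite C0.
  have -> : (nat_of_ord i == k) = false by lia.
  have -> : (nat_of_ord j == k) = false by lia.
  by field.
case: ifP => C0 //; last by rewrite addr0 mulr0.
have [[-> ->]|[-> ->]] : ((nat_of_ord i == k) = true /\ (nat_of_ord j == k) = false) \/
                   ((nat_of_ord i == k) = false /\ (nat_of_ord j == k) = true) by lia.
  by rewrite mulNr ; field.
by rewrite mulrN ; field.
Qed.

Lemma Qk_step (k : nat) (hk : (k < n)%N) (x : n.-tuple R) :
  Qk k.+1 x = 2^-1 *: (Qk k x + Qk k (flipt (Ordinal hk) x)).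
Proof.
rewrite /Qk -big_split scaler_sumr; apply: eq_bigr => i _.
rewrite -big_split scaler_sumr; apply: eq_bigr => j _.
by rewrite /= -scalerDl scalerA Qc_step.
Qed.

End Quad.
Lemma mnorm2 {R : realType} (F : normedModType R) (n : nat) (a : 'M[F]_n)
  d (S : measurableType d) (c : 'I_n -> 'I_n -> S -> R) :
  (forall i j, measurable_fun setT (c i j)) ->
  measurable_fun setT (fun w => `|\sum_(i < n) \sum_(j < n) c i j w *: a i j|).
Proof.
move=> mc.
rewrite (_ : (fun w => _) = (fun w => `|\sum_(p : 'I_n * 'I_n) c p.1 p.2 w *: a p.1 p.2|)); last first.
  by apply/funext => w; rewrite pair_bigA.
exact: (@measurable_norm_comb R F _ (fun p => a p.1 p.2) d S (fun p => c p.1 p.2)).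
Qed.
Lemma measurable_Qk {R : realType} {F : normedModType R} {n : nat} (a : 'M[F]_n) k :
  measurable_fun setT (fun x : n.-tuple R => `|Qk a k x|).
Proof.
rewrite /Qk; apply: mnorm2 => i j; rewrite /Qc.
case: ((i == j) || ((k <= i) && (k <= j)))%N; last exact: measurable_cst.
apply: measurable_funB; last exact: measurable_cst.
by apply: measurable_funM; exact: measurable_tnth.
Qed.

Lemma third_le {R : realType} (x y m : \bar R) : (0 <= m)%E ->
  (x <= m + y)%E -> (y <= m)%E -> ((3%:R)^-1%:E * (x + y) <= m)%E.
Proof.
move=> m0 hx hy.
have h : (x + y <= m + m + m)%E.
  apply: (le_trans (leeD hx hy)); apply: leeD => //.
  exact: leeD.
apply: (le_trans (lee_wpmul2l _ h)); first by rewrite lee_fin invr_ge0.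
case: m m0 {hx hy h} => [r| |] //.
  rewrite lee_fin => r0; rewrite -!EFinD -EFinM lee_fin.
  by rewrite (_ : _ * _ = r) //; field.
by move=> _; rewrite /= gt0_muley // lte_fin invr_gt0.
Qed.

Theorem lemma3p1 (d : measure_display) (T : measurableType d) (R : realType)
  (P : probability T R) (F : normedModType R) (n : nat)
  (a : 'M[F]_n) (g : 'I_n -> {RV P >-> R}) (p : R) :
  a^T = a ->
  mutually_independent_RVs g ->
  (forall i, standard_gaussian (g i)) ->
  1 <= p ->
  let W := (momentp P p (fun w => (\sum_(i < n) \sum_(j < n | i != j)
                                     (g i w * g j w) *: a i j)%R)
          + momentp P p (fun w => (\sum_(i < n) (g i w ^+ 2 - 1) *: a i i)%R))%E in
  let M := momentp P p (fun w => \sum_(i < n) \sum_(j < n)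
                     (g i w * g j w - (i == j)%:R) *: a i j) in
  ((3%:R)^-1%:E * W <= M)%E /\ (M <= W)%E.
Proof.
move=> _ indep gauss p1 W M.
have p0 : 0 < p by apply: (lt_le_trans ltr01 p1).
pose Z w := \sum_(i < n) \sum_(j < n) (g i w * g j w - (i == j)%:R) *: a i j.
pose X w := \sum_(i < n) \sum_(j < n | i != j) (g i w * g j w) *: a i j.
pose Y w := \sum_(i < n) (g i w ^+ 2 - 1) *: a i i.
pose Nm (f : T -> R) := Lnorm P p%:E (EFin \o f).
have eM : M = Nm (fun w => `|Z w|) by [].
pose nX := Nm (fun w => `|X w|).
pose nY := Nm (fun w => `|Y w|).
pose nZ := Nm (fun w => `|Z w|).
have eW : W = (nX + nY)%E by [].
have mg i : measurable_fun setT (g i : T -> R) by exact: measurable_funPT.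
have mZ : measurable_fun setT (fun w => `|Z w|).
  apply: mnorm2 => i j; apply: measurable_funB; last exact: measurable_cst.
  exact: measurable_funM.
have mX : measurable_fun setT (fun w => `|X w|).
  rewrite (_ : (fun w => _) = (fun w => `|\sum_(i < n) \sum_(j < n)
      (if i != j then g i w * g j w else 0) *: a i j|)); last first.
    apply/funext => w; congr (`|_|); apply: eq_bigr => i _.
    rewrite big_mkcond /=; apply: eq_bigr => j _.
    by case: ifP => _; rewrite ?scale0r.
  apply: mnorm2 => i j; case: (i != j); last exact: measurable_cst.
  exact: measurable_funM.
have mY : measurable_fun setT (fun w => `|Y w|).
  apply: (@measurable_norm_comb R F _ (fun i => a i i) d T
            (fun i w => g i w ^+ 2 - 1)) => i.
  apply: measurable_funB; last exact: measurable_cst.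
  under eq_fun do rewrite expr2.
  exact: measurable_funM.
have ZXY' w : Z w = X w + Y w.
  rewrite /Z /X /Y -big_split; apply: eq_bigr => i _ /=.
  rewrite (bigD1 i) //= eqxx addrC; congr (_ + _).
  apply: eq_big => j; first by rewrite eq_sym.
  by move=> ji; rewrite eq_sym (negbTE ji) subr0.
split; last first.
  rewrite eM eW.
  apply: (le_trans _ (minkowski_EFin P mX mY p1)).
  apply: Lnorm_le => //; first exact: measurable_funD.
  move=> w; rewrite normr_id ger0_norm ?addr_ge0 // ZXY'.
  exact: ler_normD.
have hX : (nX <= nZ + nY)%E.
  apply: (le_trans _ (minkowski_EFin P mZ mY p1)).
  apply: Lnorm_le => //; first exact: measurable_funD.
  move=> w; rewrite normr_id ger0_norm ?addr_ge0 //.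
  have -> : X w = Z w - Y w by rewrite ZXY' addrK.
  exact: ler_normB.
suff hY : (nY <= nZ)%E.
  by rewrite eM eW; apply: third_le => //; exact: Lnorm_ge0.
pose G := Gv (fun i => (g i : T -> R)).
have mG : measurable_fun setT G := @mGv d T R P n g.
have mQ k : measurable_fun setT (fun w => `|Qk a k (G w)|).
  exact: (measurableT_comp (measurable_Qk a k) mG).
pose nQ k := Nm (fun w => `|Qk a k (G w)|).
have step k (hk : (k < n)%N) : (nQ k.+1 <= nQ k)%E.
  pose K := Ordinal hk.
  have mB : measurable_fun setT (fun w => `|Qk a k (flipt K (G w))|).
    apply: (measurableT_comp (measurable_Qk a k)).
    exact: (measurableT_comp (@mflipt R n K) mG).
  have eqB : Nm (fun w => `|Qk a k (flipt K (G w))|) = Nm (fun w => `|Qk a k (G w)|).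
    apply: Lnorm_eq_int.
    apply: esym.
    apply: (@law_flip d T R P n g indep gauss K
              (fun x => (`|((`|Qk a k x|)%R)%:E| `^ p)%E)).
      exact: mpow (measurable_Qk a k).
    by move=> x; exact: poweR_ge0.
  have mA2 : measurable_fun setT (fun w => 2^-1 * `|Qk a k (G w)|).
    exact: measurable_funM.
  have mB2 : measurable_fun setT (fun w => 2^-1 * `|Qk a k (flipt K (G w))|).
    exact: measurable_funM.
  apply: (@le_trans _ _ (Nm (fun w => 2^-1 * `|Qk a k (G w)| +
                                    2^-1 * `|Qk a k (flipt K (G w))|))).
    apply: Lnorm_le => //; first exact: measurable_funD.
    move=> w; rewrite normr_id ger0_norm ?addr_ge0 ?mulr_ge0 ?invr_ge0 //.
    rewrite Qk_step normrZ ger0_norm ?invr_ge0 // -mulrDr.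
    by rewrite ler_wpM2l ?invr_ge0 // ler_normD.
  apply: (le_trans (minkowski_EFin P mA2 mB2 p1)).
  rewrite /Nm !LnormZ_ge0 ?invr_ge0 //.
  rewrite -/(Nm _) -/(Nm _) eqB.
  rewrite -ge0_muleDl ?lee_fin ?invr_ge0 // -EFinD.
  by rewrite (_ : 2^-1 + 2^-1 = 1 :> R) ?mul1e //; field.
have ind k : (k <= n)%N -> (nQ k <= nQ 0%N)%E.
  elim: k => [|k IH] hk //.
  exact: le_trans (step k hk) (IH (ltnW hk)).
have eY : nY = nQ n.
  apply: eq_Lnorm => w /=; congr (EFin `|_|).
  rewrite /Qk /Y; apply: eq_bigr => i _.
  rewrite (bigD1 i) //= big1 ?addr0.
    by rewrite /Qc eqxx /= /G /Gv tnth_mktuple expr2.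
  move=> j ji; rewrite /Qc.
  case: ifP => // H; last by rewrite scale0r.
  exfalso; move: H; rewrite eq_sym (negbTE ji) /=.
  by have := ltn_ord i; lia.
have eZ : nZ = nQ 0%N.
  apply: eq_Lnorm => w /=; congr (EFin `|_|).
  rewrite /Qk /Z; apply: eq_bigr => i _; apply: eq_bigr => j _.
  by rewrite /Qc orbT /G /Gv !tnth_mktuple.
by rewrite eY eZ; exact: ind.
Qed.
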